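(* Let $f:\mathbb{R}^n\to\mathbb{R}^n$ be continuously differentiable and monotone, and let $q:\mathbb{R}^n\to\mathbb{R}\cup\{+\infty\}$ be proper, convex and lower semicontinuous. Given $x\in\mathbb{R}^n$ and $d\in\mathrm{dom}\,\partial q$, define \[\mu_f(x)=\min\{\langle\nabla f(x)u,u\rangle:\|u\|=1\},\] \[\mu_q(d)=\lim_{\rho\downarrow0}\inf\Bigl\{\frac{\langle d_1^*-d_2^*,d_1-d_2\rangle}{\|d_1-d_2\|^2}: d_i\in\mathcal{B}_\rho(d),\ (d_i,d_i^* )\in\mathrm{gph}\,\partial q,\ i=1,2,\ d_1\ne d_2\Bigr\}.\] Then for every $d^*\in\partial q(d)$, \[\min_{\|s\|=1}\operatorname{dist}\bigl(0,\nabla f(x)^Ts+D^*(\partial q)(d,d^* )(s)\bigr)\ge\mu_f(x)+\mu_q(d).\]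
   Context: $f$ monotone means $\langle f(x_2)-f(x_1),x_2-x_1\rangle\ge0$ for all $x_1,x_2$. $\mathcal{B}_\rho(d)$ is the closed ball of radius $\rho$ around $d$. The limiting coderivative is $D^*F(\bar x,\bar y)(v^* )=\{u^*:(u^*,-v^* )\in N_{\mathrm{gph}\, F}(\bar x,\bar y)\}$, where $N_C(\bar z)$ is the limiting (Mordukhovich) normal cone: the set of limits of $z_k^*\in\widehat N_C(z_k)$ with $z_k\to\bar z$ in $C$, and $\widehat N_C(z)$ is the polar of the contingent cone $T_C(z)=\{w:\exists t_k\downarrow0,w_k\to w,\ z+t_kw_k\in C\}$. *)

(* Defs.v *)
From HB Require Import structures.
From mathcomp Require Import all_boot all_order all_algebra.
From mathcomp Require Import all_classical all_reals all_analysis.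
Set Implicit Arguments. Unset Strict Implicit. Unset Printing Implicit Defensive.
Import Order.TTheory GRing.Theory Num.Theory.
Import numFieldNormedType.Exports.
Local Open Scope classical_set_scope.
Local Open Scope ring_scope.

Section Defs.
Variables (R : realType) (n : nat).
Local Notation V := 'rV[R]_n.

Definition dotv (u v : V) : R := \sum_(i < n) u ord0 i * v ord0 i.
Definition enorm (u : V) : R := Num.sqrt (dotv u u).

Definition eball (d : V) (rho : R) : set V := [set y | enorm (y - d) <= rho].

Definition dotp (z w : V * V) : R := dotv z.1 w.1 + dotv z.2 w.2.

Definition monotone_map (f : V -> V) : Prop :=
  forall x1 x2 : V, 0 <= dotv (f x2 - f x1) (x2 - x1).

(* f continuously differentiable: differentiable everywhere, and the
   Jacobian x |-> 'J f x is continuous. With row vectors, the derivative acts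
   as  h |-> h *m 'J f x  (lemma deriveEjacobian). *)
Definition C1 (f : V -> V) : Prop :=
  (forall x, differentiable f x) /\ continuous (fun x => jacobian f x).

Definition proper_fun (q : V -> \bar R) : Prop :=
  (forall x, q x != -oo%E) /\ (exists x, q x \is a fin_num).

Definition convex_fun (q : V -> \bar R) : Prop :=
  forall (x y : V) (t : R), 0 < t < 1 ->
    (q (t *: x + (1 - t) *: y)%R <= t%:E * q x + (1 - t)%:E * q y)%E.

Definition lsc_fun (q : V -> \bar R) : Prop :=
  forall (x : V) (a : R), (a%:E < q x)%E -> \forall y \near x, (a%:E < q y)%E.

Definition subdiff (q : V -> \bar R) (d : V) : set V :=
  [set v | q d \is a fin_num /\
           forall y : V, (q d + (dotv v (y - d)%R)%:E <= q y)%E].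

Definition dom_subdiff (q : V -> \bar R) : set V :=
  [set d | subdiff q d !=set0].

Definition gph_subdiff (q : V -> \bar R) : set (V * V) :=
  [set z | subdiff q z.1 z.2].

Definition tangent_cone (C : set (V * V)) (z : V * V) : set (V * V) :=
  [set w | exists (t : nat -> R) (wk : nat -> V * V),
     (forall k, 0 < t k) /\ t @ \oo --> 0 /\ wk @ \oo --> w /\
     (forall k, C (z + t k *: wk k))].

Definition reg_normal (C : set (V * V)) (z : V * V) : set (V * V) :=
  [set zs | forall w, tangent_cone C z w -> dotp zs w <= 0].

Definition lim_normal (C : set (V * V)) (z : V * V) : set (V * V) :=
  [set zs | exists (zk zsk : nat -> V * V),
     (forall k, C (zk k)) /\ zk @ \oo --> z /\
     (forall k, reg_normal C (zk k) (zsk k)) /\ zsk @ \oo --> zs].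

Definition coderiv_subdiff (q : V -> \bar R) (d ds v : V) : set V :=
  [set u | lim_normal (gph_subdiff q) (d, ds) (u, - v)].

(* distance from 0 to a set (+oo for the empty set) *)
Definition dist0 (S : set V) : \bar R := ereal_inf [set (enorm y)%:E | y in S].

Definition mu_f (f : V -> V) (x : V) : \bar R :=
  ereal_inf [set (dotv (u *m jacobian f x) u)%:E | u in [set u | enorm u = 1]].

Definition mu_q_rho (q : V -> \bar R) (d : V) (rho : R) : \bar R :=
  ereal_inf [set r | exists d1 d1s d2 d2s : V,
     [/\ eball d rho d1 /\ eball d rho d2, subdiff q d1 d1s, subdiff q d2 d2s,
         d1 != d2 &
         r = (dotv (d1s - d2s) (d1 - d2) / (enorm (d1 - d2)) ^+ 2)%:E]].

Definition mu_q (q : V -> \bar R) (d : V) : \bar R :=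
  lim (mu_q_rho q d @ (0 : R)^'+).

End Defs.

(* Main.v *)
Require Import Defs.
From HB Require Import structures.
From mathcomp Require Import all_boot all_order all_algebra.
From mathcomp Require Import all_classical all_reals all_analysis.
From mathcomp Require Import lra ring.
Import Order.TTheory GRing.Theory Num.Theory.
Import numFieldNormedType.Exports.
Local Open Scope classical_set_scope.
Local Open Scope ring_scope.
Section Dot.
Context {R : realType} {n : nat}.
Implicit Types (u v w : 'rV[R]_n).

Lemma dotvC u v : dotv u v = dotv v u.
Proof. by apply: eq_bigr => i _; rewrite mulrC. Qed.
Lemma dotvDl u v w : dotv (u + v) w = dotv u w + dotv v w.
Proof. by rewrite /dotv -big_split; apply: eq_bigr => i _; rewrite mxE mulrDl. Qed.
Lemma dotvZl a u w : dotv (a *: u) w = a * dotv u w.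
Proof. by rewrite /dotv mulr_sumr; apply: eq_bigr => i _; rewrite mxE mulrA. Qed.
Lemma dotvNl u w : dotv (- u) w = - dotv u w.
Proof. by rewrite -scaleN1r dotvZl mulN1r. Qed.
Lemma dotvBl u v w : dotv (u - v) w = dotv u w - dotv v w.
Proof. by rewrite dotvDl dotvNl. Qed.
Lemma dotvDr u v w : dotv w (u + v) = dotv w u + dotv w v.
Proof. by rewrite dotvC dotvDl !(dotvC w). Qed.
Lemma dotvZr a u w : dotv w (a *: u) = a * dotv w u.
Proof. by rewrite dotvC dotvZl dotvC. Qed.
Lemma dotvNr u w : dotv w (- u) = - dotv w u.
Proof. by rewrite dotvC dotvNl dotvC. Qed.
Lemma dotvBr u v w : dotv w (u - v) = dotv w u - dotv w v.
Proof. by rewrite dotvDr dotvNr. Qed.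
Lemma dotv0l u : dotv 0 u = 0.
Proof. by rewrite /dotv big1 // => i _; rewrite mxE mul0r. Qed.
Lemma dotv0r u : dotv u 0 = 0.
Proof. by rewrite dotvC dotv0l. Qed.
Lemma dotv_ge0 u : 0 <= dotv u u.
Proof. by apply: sumr_ge0 => i _; exact: sqr_ge0. Qed.
Lemma coord_le_dotv u i : (u ord0 i) ^+ 2 <= dotv u u.
Proof.
rewrite /dotv (bigD1 i) //= -expr2 lerDl.
by apply: sumr_ge0 => j _; exact: sqr_ge0.
Qed.
Lemma enorm_sq u : enorm u ^+ 2 = dotv u u.
Proof. by rewrite /enorm sqr_sqrtr // dotv_ge0. Qed.
Lemma enorm_ge0 u : 0 <= enorm u.
Proof. exact: sqrtr_ge0. Qed.
Lemma dotv_amgm u v : 2 * dotv u v <= dotv u u + dotv v v.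
Proof.
have := dotv_ge0 (u - v); rewrite !dotvBl !dotvBr (dotvC v u); lra.
Qed.
Lemma dotv_amgm_t u v t : 0 < t -> 2 * t * dotv u v <= t ^+ 2 * dotv u u + dotv v v.
Proof.
move=> t0; have := dotv_amgm (t *: u) v.
by rewrite !dotvZl !dotvZr; nra.
Qed.
Lemma dotv_eq0 u : dotv u u = 0 -> u = 0.
Proof.
move=> h; apply/rowP => i; rewrite mxE.
have := coord_le_dotv u i; rewrite h => h2.
by apply/eqP; rewrite -sqrf_eq0 eq_le h2 sqr_ge0.
Qed.
Lemma dotv_cs u v : dotv u v <= enorm u * enorm v.
Proof.
have hu := enorm_sq u; have hv := enorm_sq v.
have gu := enorm_ge0 u; have gv := enorm_ge0 v.
have [u0|u0] := eqVneq (enorm u) 0.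
  have : dotv u u = 0 by rewrite -hu u0 expr0n.
  by move/dotv_eq0 => ->; rewrite dotv0l mulr_ge0 // enorm_ge0.
have [v0|v0] := eqVneq (enorm v) 0.
  have : dotv v v = 0 by rewrite -hv v0 expr0n.
  by move/dotv_eq0 => ->; rewrite dotv0r mulr_ge0 // enorm_ge0.
have eu : 0 < enorm u by rewrite lt_def u0.
have ev : 0 < enorm v by rewrite lt_def v0.
set t := enorm v / enorm u.
have t0 : 0 < t by rewrite divr_gt0.
have te : t * enorm u = enorm v by rewrite /t mulfVK.
have := (@dotv_amgm_t u v t t0); rewrite -hu -hv => h.
have h2 : 2 * t * dotv u v <= 2 * enorm v ^+ 2.
  by apply: (le_trans h); rewrite -exprMn te; lra.
have h3 : t * dotv u v <= t * (enorm u * enorm v).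
  by rewrite mulrA te; nra.
by rewrite -(ler_pM2l t0).
Qed.
End Dot.
Section Topo.
Context {R : realType} {n : nat}.

Lemma cvg_bigsum {T} (F : set_system T) {FF : Filter F} (I : Type) (r : seq I)
   (f : I -> T -> R) (l : I -> R) :
  (forall i, f i @ F --> l i) ->
  (fun x => \sum_(i <- r) f i x) @ F --> \sum_(i <- r) l i.
Proof.
move=> fl; elim: r => [|i r IH].
  rewrite big_nil; under eq_fun do rewrite big_nil; exact: cvg_cst.
rewrite big_cons; under eq_fun do rewrite big_cons.
exact: cvgD.
Qed.

Lemma cvg_coord {T} {F : set_system T} {FF : Filter F} {f : T -> 'rV[R]_n} {a : 'rV[R]_n} i :
  f @ F --> a -> (fun x => f x ord0 i) @ F --> a ord0 i.
Proof.
move=> fa; exact: (continuous_cvg _ (@coord_continuous R 1 n ord0 i a) fa).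
Qed.

Lemma cvg_dotv {T} {F : set_system T} {FF : Filter F} {f g : T -> 'rV[R]_n} {a b : 'rV[R]_n} :
  f @ F --> a -> g @ F --> b -> (fun x => dotv (f x) (g x)) @ F --> dotv a b.
Proof.
move=> fa gb; rewrite /dotv; apply: cvg_bigsum => i.
have := cvgM (cvg_coord i fa) (cvg_coord i gb).
exact.
Qed.

Lemma bounded_cluster {a : nat -> 'rV[R]_n} {M} :
  (forall j, dotv (a j) (a j) <= M) -> exists c, cluster (a @ \oo) c.
Proof.
move=> aM.
pose C := [set v : 'rV[R]_n | forall i, (`[-(M+1), M+1]%classic) (v ord0 i)].
have cC : compact C.
  by apply: (@rV_compact _ _ (fun=> `[-(M+1), M+1]%classic)) => i; exact: segment_compact.
have M0 : 0 <= M by apply: le_trans (aM 0%N); exact: dotv_ge0.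
have FC : (a @ \oo) C.
  exists 0%N => // j _ i /=; rewrite in_itv /=.
  have := coord_le_dotv (a j) i; have := aM j.
  set x := a j ord0 i => h1 h2; apply/andP; split; nra.
have [c [_ cc]] := cC _ _ FC.
by exists c.
Qed.

Lemma cluster_subseq {a : nat -> 'rV[R]_n} {c} : cluster (a @ \oo) c ->
  exists j : nat -> nat, (forall m, (m <= j m)%N) /\ (a \o j) @ \oo --> c.
Proof.
move=> cc.
have : forall m : nat, exists k : nat, (m <= k)%N /\ `|c - a k| < m.+1%:R^-1.
  move=> m.
  have := cc (a @` [set k | (m <= k)%N]) (ball c m.+1%:R^-1).
  case.
  - by exists m => // k /= mk; exists k.
  - by apply: nbhsx_ballx; rewrite invr_gt0 ltr0n.
  move=> x [[k /= mk <-]]; rewrite -ball_normE /ball_ /= => h.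
  by exists k.
case/choice => j hj; exists j; split; first by move=> m; case: (hj m).
apply/cvgrPdist_lt => e e0.
have := near_infty_natSinv_lt (PosNum e0).
apply: filterS => m /= h; case: (hj m) => _ h2.
exact: lt_trans h2 h.
Qed.

End Topo.
Section Prox.
Context {R : realType} {n : nat}.
Local Notation V := 'rV[R]_n.

Lemma ecase {z : \bar R} : z != -oo%E -> z = +oo%E \/ exists r, z = r%:E.
Proof. by case: z => [r||] // _; [right; exists r | left]. Qed.

Lemma subdiff_fin {q : V -> \bar R} {x y} : subdiff q x y -> q x = (fine (q x))%:E.
Proof. by case=> h _; rewrite fineK. Qed.

Lemma subdiff_mono {q : V -> \bar R} {x1 y1 x2 y2} : subdiff q x1 y1 -> subdiff q x2 y2 ->
  0 <= dotv (y1 - y2) (x1 - x2).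
Proof.
move=> h1 h2; have e1 := subdiff_fin h1; have e2 := subdiff_fin h2.
case: h1 => _ /(_ x2); case: h2 => _ /(_ x1).
rewrite e1 e2 -!EFinD !lee_fin => i1 i2.
rewrite !dotvBr in i1 i2; rewrite dotvBl !dotvBr; lra.
Qed.

End Prox.
Section Prox2.
Context {R : realType} {n : nat}.
Local Notation V := 'rV[R]_n.

Lemma prox_exists (q : V -> \bar R) (x y p : V) (c : R) : 0 < c ->
  proper_fun q -> convex_fun q -> lsc_fun q -> subdiff q x y ->
  exists xi : V, subdiff q xi (c *: (p - xi)).
Proof.
move=> c0 [qN _] qc ql hxy.
pose D (e : V) := dotv (e - p) (e - p).
pose Q (e : V) := c * D e / 2.
pose F (e : V) := (q e + (Q e)%:E)%E.
have ex := subdiff_fin hxy; set rx := fine (q x) in ex.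
pose L1 := rx + dotv y (p - x).
have Flb : forall e r, q e = r%:E -> c * L1 - dotv y y + c ^+ 2 * D e / 4 <= c * (r + Q e).
  move=> e r qe.
  have := hxy.2 e; rewrite ex qe -EFinD lee_fin => h.
  have := dotv_ge0 ((c / 2) *: (e - p) + y).
  rewrite !dotvDl !dotvDr !dotvZl !dotvZr -/(D e) => h2.
  have h3 : dotv y (e - x) = dotv y (e - p) + dotv y (p - x).
    by rewrite -dotvDr; congr dotv; rewrite addrA subrK.
  have h4 : dotv (e - p) y = dotv y (e - p) by rewrite dotvC.
  rewrite /Q /L1; nra.
have Fx : F x = (rx + Q x)%:E by rewrite /F ex.
have lbF : forall e, ((L1 - dotv y y / c)%:E <= F e)%E.
  move=> e; rewrite /F; have [->|[r qe]] := ecase (qN e).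
    by rewrite addye // leey.
  rewrite qe -EFinD lee_fin -(ler_pM2l c0) mulrBr mulrCA divff ?mulr1 ?(gt_eqF c0) //.
  have := Flb e r qe; have := dotv_ge0 (e - p); rewrite -/(D e); nra.
pose S := range F.
have [mr em] : exists mr, ereal_inf S = mr%:E.
  case E : (ereal_inf S) => [r| |]; first by exists r.
  - have : (ereal_inf S <= F x)%E by apply: ereal_inf_lbound; exists x.
    by rewrite E Fx leNgt ltry.
  - have : ((L1 - dotv y y / c)%:E <= ereal_inf S)%E.
      by apply: le_ereal_inf_tmp => _ [e _ <-]; exact: lbF.
    by rewrite E leNgt ltNyr.
have hseq : forall k : nat, exists e, (F e < (mr + k.+1%:R^-1)%:E)%E.
  move=> k; have : (ereal_inf S < (mr + k.+1%:R^-1)%:E)%E.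
    by rewrite em lte_fin ltrDl invr_gt0 ltr0n.
  by case/ereal_inf_lt => _ [e _ <-] h; exists e.
have [eta heta] := choice hseq.
pose M := 4 * (c * (mr + 1) - c * L1 + dotv y y) / c ^+ 2.
have hb : forall k, dotv (eta k - p) (eta k - p) <= M.
  move=> k; have := heta k; rewrite /F.
  have [qe|[r qe]] := ecase (qN (eta k)); rewrite qe.
    by rewrite addye // ltNge leey.
  rewrite -EFinD lte_fin => h.
  have := Flb _ _ qe.
  have : k.+1%:R^-1 <= (1 : R) by rewrite invf_le1 ?ler1n ?ltr0n.
  rewrite /M ler_pdivlMr ?exprn_gt0 // -/(D (eta k)) => h6 h7.
  have h8 : c * (r + Q (eta k)) <= c * (mr + 1).
    by rewrite ler_pM2l //; apply: le_trans (ltW h) _; rewrite lerD2l.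
  rewrite /Q in h7 h8; lra.
have [z cz] := bounded_cluster hb.
have [j [jm jz]] := cluster_subseq cz.
pose xi := z + p.
have etaj : (fun m => eta (j m)) @ \oo --> xi.
  have -> : (fun m => eta (j m)) = ((fun k => eta k - p) \o j) + cst p.
    by apply/funext => m /=; rewrite subrK.
  exact: (cvgD jz (cvg_cst p)).
have Fxi : (F xi <= mr%:E)%E.
  rewrite leNgt; apply/negP => hlt.
  have [del [del0 hdel]] : exists del : R, 0 < del /\ ((mr + 3 * del - Q xi)%:E < q xi)%E.
    have [qe|[r qe]] := ecase (qN xi).
      by exists 1; split => //; rewrite qe ltry.
    move: hlt; rewrite /F qe -EFinD lte_fin => hlt.
    exists ((r + Q xi - mr) / 4); split; first by rewrite divr_gt0 // subr_gt0.
    rewrite lte_fin; lra.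
  have nq := ql _ _ hdel.
  have hD : (fun m => D (eta (j m))) @ \oo --> D xi.
    exact: cvg_dotv (cvgB etaj (cvg_cst p)) (cvgB etaj (cvg_cst p)).
  have Qc : (fun m => Q (eta (j m))) @ \oo --> Q xi.
    have := cvgM (cvgM (cvg_cst c) hD) (cvg_cst (2^-1 : R)).
    exact.
  have ev1 : \forall m \near \oo, ((mr + 3 * del - Q xi)%:E < q (eta (j m)))%E := etaj _ nq.
  have ev2 : \forall m \near \oo, Q xi - del < Q (eta (j m)).
    move/cvgrPdist_lt : Qc => /(_ del del0); apply: filterS => m.
    rewrite ltr_norml; lra.
  have ev3 := near_infty_natSinv_lt (PosNum del0).
  have [m /= [[h1 h2] h3]] := filter_ex (filterI (filterI ev1 ev2) ev3).
  have h4 : (j m).+1%:R^-1 <= m.+1%:R^-1 :> R.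
    by rewrite lef_pV2 ?posrE ?ltr0n // ler_nat ltnS.
  have := heta (j m); rewrite /F.
  have [qe|[r qe]] := ecase (qN (eta (j m))); rewrite qe.
    by rewrite addye // ltNge leey.
  rewrite -EFinD lte_fin => h5.
  move: h1; rewrite qe lte_fin => h1.
  have h6 : r + Q (eta (j m)) < mr + del.
    apply: (lt_le_trans h5); rewrite lerD2l; apply: (le_trans h4); exact: ltW.
  have del0' := del0; move: h1 h2 h6 del0'; clear; move: (Q xi) (Q (eta (j m))) => a b.
  lra.
have [rxi qxi] : exists r, q xi = r%:E.
  have [qe|//] := ecase (qN xi).
  by move: Fxi; rewrite /F qe addye // leNgt ltry.
have Fmin : forall e, (F xi <= F e)%E.
  move=> e; apply: le_trans Fxi _; rewrite -em; apply: ereal_inf_lbound; by exists e.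
exists xi; split; first by rewrite qxi.
move=> e; rewrite qxi.
have [qe|[re qe]] := ecase (qN e); first by rewrite qe leey.
rewrite qe -EFinD lee_fin.
rewrite dotvZl.
set P := dotv (p - xi) (e - xi).
set E := dotv (e - xi) (e - xi).
rewrite leNgt; apply/negP => hg.
set g := rxi + c * P - re.
have g0 : 0 < g by rewrite /g; lra.
have E0 : 0 <= E by exact: dotv_ge0.
pose t := g / (c * E + g + 1).
have den0 : 0 < c * E + g + 1 by nra.
have tden : t * (c * E + g + 1) = g by rewrite /t mulfVK // gt_eqF.
have t0 : 0 < t by rewrite /t divr_gt0.
have t1 : t < 1 by nra.
have := qc e xi t; rewrite t0 t1 => /(_ isT).
rewrite qe qxi -!EFinM -EFinD.
set zeta := t *: e + (1 - t) *: xi.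
have [qz|[rz qz]] := ecase (qN zeta); first by rewrite qz leNgt ltry.
rewrite qz lee_fin => hconv.
have := Fmin zeta; rewrite /F qz qxi -!EFinD lee_fin => hmin.
have hz : zeta - p = (xi - p) + t *: (e - xi).
  by apply/rowP => i; rewrite !mxE; ring.
have hQ : Q zeta = Q xi + c * t * dotv (xi - p) (e - xi) + c * t ^+ 2 * E / 2.
  rewrite /Q /D hz /E; move: (xi - p) (e - xi) => A B.
  rewrite !dotvDl !dotvDr !dotvZl !dotvZr (dotvC B A); by field.
have hP : dotv (xi - p) (e - xi) = - P.
  by rewrite /P -dotvNl opprB.
rewrite hQ hP in hmin.
have h1 : t * g <= t * (c * t * E / 2).
  rewrite /g; nra.
rewrite ler_pM2l // in h1.
have h2 : c * t * E = g - t * g - t by nra.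
nra.
Qed.

End Prox2.
Section RegN.
Context {R : realType} {n : nat}.
Local Notation V := 'rV[R]_n.

Lemma alg_key (a u s : V) (c mu : R) : 0 < c + mu ->
  dotv u a + c * dotv s (a + s) <= 0 -> mu * dotv a a <= - c * dotv a (a + s) ->
  - dotv (u - (2 * mu) *: s) (u - (2 * mu) *: s) / (4 * (c + mu))
    <= dotv u s - mu * dotv s s.
Proof.
move=> cm hT hM.
set v := u - (2 * mu) *: s.
set w := a + s.
have ha : a = w - s by rewrite /w addrK.
rewrite ha in hT hM.
have h0 := dotv_ge0 ((2 * (c + mu)) *: w + v).
move: h0 hT hM; rewrite /v.
rewrite ?dotvDl ?dotvDr ?dotvNl ?dotvNr ?dotvZl ?dotvZr ?dotvDl ?dotvDr ?dotvNl ?dotvNr ?dotvZl ?dotvZr.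
rewrite (dotvC s a) (dotvC s u) (dotvC a u).
move: (dotv a a) (dotv a s) (dotv s s) (dotv u u) (dotv u s) (dotv u a) => aa as_ ss uu us ua.
move=> h0 hT hM.
rewrite ler_pdivrMr ?mulr_gt0 //.
nra.
Qed.
End RegN.
Section RegN2.
Context {R : realType} {n : nat}.
Local Notation V := 'rV[R]_n.

Lemma regnormal_key (q : V -> \bar R) (d x y u s : V) (rho mu c : R) :
  proper_fun q -> convex_fun q -> lsc_fun q -> 0 < c ->
  (forall d1 d1s d2 d2s, dotv (d1 - d) (d1 - d) <= rho ^+ 2 ->
     dotv (d2 - d) (d2 - d) <= rho ^+ 2 ->
     subdiff q d1 d1s -> subdiff q d2 d2s -> d1 != d2 ->
     mu * dotv (d1 - d2) (d1 - d2) <= dotv (d1s - d2s) (d1 - d2)) ->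
  subdiff q x y -> 4 * dotv (x - d) (x - d) < rho ^+ 2 ->
  reg_normal (gph_subdiff q) (x, y) (u, - s) ->
  exists a : V, dotv u a + c * dotv s (a + s) <= 0 /\
                mu * dotv a a <= - c * dotv a (a + s).
Proof.
move=> qp qc ql c0 hsm hxy hxd hreg.
pose lam (j : nat) : R := j.+1%:R^-1.
have lam0 j : 0 < lam j by rewrite invr_gt0 ltr0n.
have lamK j : lam j * j.+1%:R = 1 by rewrite mulVf // pnatr_eq0.
pose pj j := x + c^-1 *: y - lam j *: s.
have hpx : forall j, exists xi, subdiff q xi (c *: (pj j - xi)) :=
  fun j => prox_exists q x y (pj j) c c0 qp qc ql hxy.
have [xj hxj] := choice hpx.
pose yj j := c *: (pj j - xj j).
pose aj j := j.+1%:R *: (xj j - x).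
have hx j : x + lam j *: aj j = xj j.
  by rewrite /aj scalerA lamK scale1r addrC subrK.
have hy j : y + lam j *: (- c *: (aj j + s)) = yj j.
  apply/rowP => i; rewrite /yj /pj /aj !mxE /lam.
  by field; rewrite addrC natr1 pnatr_eq0 /= gt_eqF.
have hdx j : xj j - x = lam j *: aj j by rewrite -(hx j) [x + _]addrC addrK.
have hdy j : yj j - y = lam j *: (- c *: (aj j + s)) by rewrite -(hy j) [y + _]addrC addrK.
clearbody aj.
have hmono j : 0 <= - c * dotv (aj j) (aj j + s).
  have := subdiff_mono (hxj j) hxy.
  rewrite -/(yj j) hdx hdy !dotvZl !dotvZr (dotvC (aj j + s)).
  have := lam0 j; set L := lam j; set D := dotv _ _ => L0 h.
  have h2 : 0 <= L * L * (- c * D) by rewrite mulrA in h; lra.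
  by move: h2; rewrite pmulr_rge0 // mulr_gt0.
have hb j : dotv (aj j) (aj j) <= dotv s s.
  have := hmono j; rewrite dotvDr => h.
  have := dotv_amgm (aj j) (- s); rewrite dotvNr dotvNl dotvNr opprK => h2.
  have h3 : dotv (aj j) (aj j) + dotv (aj j) s <= 0.
    by rewrite -oppr_ge0 -(pmulr_rge0 _ c0); rewrite mulNr -mulrN in h; lra.
  lra.
have [z cz] := bounded_cluster hb.
have [jj [jjm jz]] := cluster_subseq cz.
have lamjj : (fun m => lam (jj m)) @ \oo --> (0 : R).
  apply/cvgrPdist_lt => e e0.
  have := near_infty_natSinv_lt (PosNum e0).
  apply: filterS => m /= h; rewrite sub0r normrN ger0_norm ?ltW //.
  apply: le_lt_trans h; rewrite /lam lef_pV2 ?posrE ?ltr0n // ler_nat ltnS.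
  exact: jjm.
exists z; split.
  have tz : tangent_cone (gph_subdiff q) (x, y) (z, - c *: (z + s)).
    exists (fun m => lam (jj m)), (fun m => (aj (jj m), - c *: (aj (jj m) + s))).
    split; first by move=> k; exact: lam0.
    split; first exact: lamjj.
    split.
      have h2 : (fun m => - c *: (aj (jj m) + s)) @ \oo --> - c *: (z + s).
        have := cvgZ (cvg_cst (- c)) (cvgD jz (cvg_cst s)); exact.
      have := cvg_pair jz h2; exact.
    move=> k; rewrite /gph_subdiff /=.
    rewrite hx hy; exact: hxj.
  have := hreg _ tz; rewrite /dotp /= dotvNl dotvZr mulNr opprK.
  done.
pose g (v : V) := - c * dotv v (v + s) - mu * dotv v v.
suff : 0 <= g z by rewrite /g subr_ge0.
have s0 := dotv_ge0 s.
have xd0 := dotv_ge0 (x - d).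
have rho0 : 0 < rho ^+ 2 by lra.
pose del := rho ^+ 2 / (4 * (dotv s s + 1)).
have del0 : 0 < del by rewrite /del divr_gt0 //; lra.
have hdel : del * (4 * (dotv s s + 1)) = rho ^+ 2.
  by rewrite /del mulfVK // gt_eqF //; lra.
have evJ : \forall j \near \oo, lam j < del := near_infty_natSinv_lt (PosNum del0).
have evM : \forall j \near \oo, 0 <= g (aj j).
  apply: filterS evJ => j hj.
  have hL1 : lam j <= 1 by rewrite /lam invf_le1 ?ler1n ?ltr0n.
  have hxjd : dotv (xj j - d) (xj j - d) <= rho ^+ 2.
    have e1 : xj j - d = (xj j - x) + (x - d) by rewrite addrA subrK.
    rewrite e1 hdx.
    have hA := hb j.
    have L0 := lam0 j.
    move: (x - d) xd0 hxd => e xd0 hxd.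
    have := dotv_amgm (lam j *: aj j) e.
    rewrite !dotvDl !dotvDr !dotvZl !dotvZr (dotvC e).
    move: (lam j) (dotv (aj j) (aj j)) (dotv (aj j) e) (dotv e e) hj hL1 L0 hA xd0 hxd => L AA AE EE hj hL1 L0 hA xd0 hxd h.
    have hLL : L * L <= del by nra.
    have h3 : L * L * AA <= del * dotv s s by nra.
    have h4 : 4 * (del * dotv s s) <= rho ^+ 2 by nra.
    nra.
  have hxx : dotv (x - d) (x - d) <= rho ^+ 2 by lra.
  have [exj|nxj] := eqVneq (xj j) x.
    have aj0 : aj j = 0.
      have := hdx j; rewrite exj subrr => /esym/eqP.
      by rewrite scaler_eq0 (gt_eqF (lam0 j)) /= => /eqP.
    by rewrite /g aj0 !dotv0l !mulr0 subrr.
  have := hsm _ _ _ _ hxjd hxx (hxj j) hxy nxj.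
  rewrite -/(yj j) hdx hdy !dotvZl !dotvZr (dotvC (aj j + s)).
  have L0 := lam0 j.
  rewrite /g; move: (lam j) (dotv (aj j) (aj j)) (dotv (aj j) (aj j + s)) L0 => L AA AS L0 h.
  have h2 : L * L * (mu * AA) <= L * L * (- c * AS) by nra.
  rewrite ler_pM2l ?mulr_gt0 // in h2; lra.
have evMm : \forall m \near \oo, 0 <= g (aj (jj m)).
  case: evM => J _ hJ; exists J => // m /= Jm.
  apply: hJ => /=; exact: leq_trans Jm (jjm m).
have hg : (fun m => g (aj (jj m))) @ \oo --> g z.
  have hd1 : (fun m => dotv (aj (jj m)) (aj (jj m) + s)) @ \oo --> dotv z (z + s).
    exact: (cvg_dotv jz (cvgD jz (cvg_cst s))).
  have hd2 : (fun m => dotv (aj (jj m)) (aj (jj m))) @ \oo --> dotv z z.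
    exact: (cvg_dotv jz jz).
  have := cvgB (cvgM (cvg_cst (- c)) hd1) (cvgM (cvg_cst mu) hd2); exact.
rewrite leNgt; apply/negP => gneg.
move/cvgrPdist_lt: hg => /(_ (- g z)); rewrite oppr_gt0 => /(_ gneg) ev.
have [m /= [h1 h2]] := filter_ex (filterI evMm ev).
move: h2; rewrite ltr_norml; lra.
Qed.
End RegN2.
Section LimN.
Context {R : realType} {n : nat}.
Local Notation V := 'rV[R]_n.

Lemma regnormal_bound (q : V -> \bar R) (d x y u s : V) (rho mu : R) :
  proper_fun q -> convex_fun q -> lsc_fun q ->
  (forall d1 d1s d2 d2s, dotv (d1 - d) (d1 - d) <= rho ^+ 2 ->
     dotv (d2 - d) (d2 - d) <= rho ^+ 2 ->
     subdiff q d1 d1s -> subdiff q d2 d2s -> d1 != d2 ->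
     mu * dotv (d1 - d2) (d1 - d2) <= dotv (d1s - d2s) (d1 - d2)) ->
  subdiff q x y -> 4 * dotv (x - d) (x - d) < rho ^+ 2 ->
  reg_normal (gph_subdiff q) (x, y) (u, - s) ->
  mu * dotv s s <= dotv u s.
Proof.
move=> qp qc ql hsm hxy hxd hreg.
rewrite -subr_ge0 leNgt; apply/negP => hG.
set G := dotv u s - mu * dotv s s in hG.
set V2 := dotv (u - (2 * mu) *: s) (u - (2 * mu) *: s).
have V20 : 0 <= V2 by exact: dotv_ge0.
set r := V2 / (- G).
have rG : r * (- G) = V2 by rewrite /r mulfVK // gt_eqF // oppr_gt0.
have r0 : 0 <= r by rewrite /r divr_ge0 // ltW // oppr_gt0.
set c := `|mu| + 1 + r.
have c0 : 0 < c by rewrite /c; have := normr_ge0 mu; lra.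
have cm : 1 + r <= c + mu by rewrite /c; have := ler_norm (- mu); rewrite normrN; lra.
have [a [hT hM]] := regnormal_key q d x y u s rho mu c qp qc ql c0 hsm hxy hxd hreg.
have cm0 : 0 < c + mu by lra.
have := alg_key a u s c mu cm0 hT hM; rewrite -/V2 -/G.
rewrite ler_pdivrMr ?mulr_gt0 //.
nra.
Qed.

Lemma limnormal_bound (q : V -> \bar R) (d ds u s : V) (rho mu : R) :
  proper_fun q -> convex_fun q -> lsc_fun q -> 0 < rho ->
  (forall d1 d1s d2 d2s, dotv (d1 - d) (d1 - d) <= rho ^+ 2 ->
     dotv (d2 - d) (d2 - d) <= rho ^+ 2 ->
     subdiff q d1 d1s -> subdiff q d2 d2s -> d1 != d2 ->
     mu * dotv (d1 - d2) (d1 - d2) <= dotv (d1s - d2s) (d1 - d2)) ->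
  lim_normal (gph_subdiff q) (d, ds) (u, - s) ->
  mu * dotv s s <= dotv u s.
Proof.
move=> qp qc ql rho0 hsm [zk [zsk [hz [zkc [hreg zskc]]]]].
have h1 : (fun k => (zk k).1) @ \oo --> d.
  apply: cvg_comp zkc _; exact: cvg_fst.
have hu : (fun k => (zsk k).1) @ \oo --> u.
  apply: cvg_comp zskc _; exact: cvg_fst.
have hs' : (fun k => (zsk k).2) @ \oo --> - s.
  apply: cvg_comp zskc _; exact: cvg_snd.
have hs : (fun k => - (zsk k).2) @ \oo --> s.
  have := cvgN hs'; rewrite opprK; exact.
have hc : (fun k => dotv ((zk k).1 - d) ((zk k).1 - d)) @ \oo --> dotv (d - d) (d - d).
  exact: (cvg_dotv (cvgB h1 (cvg_cst d)) (cvgB h1 (cvg_cst d))).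
rewrite subrr dotv0l in hc.
have r4 : 0 < rho ^+ 2 / 4 by rewrite divr_gt0 // exprn_gt0.
have evx : \forall k \near \oo, 4 * dotv ((zk k).1 - d) ((zk k).1 - d) < rho ^+ 2.
  move/cvgrPdist_lt : hc => /(_ _ r4); apply: filterS => k.
  rewrite sub0r normrN => h; have := ler_norm (dotv ((zk k).1 - d) ((zk k).1 - d)).
  lra.
have evB : \forall k \near \oo,
    0 <= dotv (zsk k).1 (- (zsk k).2) - mu * dotv (- (zsk k).2) (- (zsk k).2).
  apply: filterS evx => k hk.
  have hr : reg_normal (gph_subdiff q) ((zk k).1, (zk k).2) ((zsk k).1, - - (zsk k).2).
    by rewrite opprK -!surjective_pairing; exact: hreg k.
  rewrite subr_ge0.
  exact: (regnormal_bound q d (zk k).1 (zk k).2 (zsk k).1 (- (zsk k).2) rho mu qp qc ql hsm (hz k) hk hr).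
have hcv : (fun k => dotv (zsk k).1 (- (zsk k).2) - mu * dotv (- (zsk k).2) (- (zsk k).2))
    @ \oo --> dotv u s - mu * dotv s s.
  have hd1 : (fun k => dotv (zsk k).1 (- (zsk k).2)) @ \oo --> dotv u s.
    exact: (cvg_dotv hu hs).
  have hd2 : (fun k => dotv (- (zsk k).2) (- (zsk k).2)) @ \oo --> dotv s s.
    exact: (cvg_dotv hs hs).
  have := cvgB hd1 (cvgM (cvg_cst mu) hd2); exact.
rewrite -subr_ge0 leNgt; apply/negP => gneg.
move/cvgrPdist_lt: hcv => /(_ (- (dotv u s - mu * dotv s s))).
rewrite oppr_gt0 => /(_ gneg) ev.
have [m /= [h3 h4]] := filter_ex (filterI evB ev).
move: h4; rewrite ltr_norml; lra.
Qed.

End LimN.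
Section Final.
Context {R : realType} {n : nat}.
Local Notation V := 'rV[R]_n.

Lemma dotv_trmx (s : V) (J : 'M[R]_n) : dotv (s *m J^T) s = dotv (s *m J) s.
Proof.
rewrite /dotv.
transitivity (\sum_(i < n) \sum_(j < n) s ord0 j * J i j * s ord0 i).
  by apply: eq_bigr => i _; rewrite !mxE big_distrl /=; apply: eq_bigr => j _; rewrite !mxE.
rewrite exchange_big /=; apply: eq_bigr => i _; rewrite !mxE big_distrl /=.
by apply: eq_bigr => j _; ring.
Qed.

Lemma muqrho_bound (q : V -> \bar R) (d ds u s : V) (rho : R) :
  proper_fun q -> convex_fun q -> lsc_fun q -> 0 < rho ->
  lim_normal (gph_subdiff q) (d, ds) (u, - s) -> dotv s s = 1 ->
  (mu_q_rho q d rho <= (dotv u s)%:E)%E.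
Proof.
move=> qp qc ql rho0 hlim s1.
have eb (v : V) : dotv (v - d) (v - d) <= rho ^+ 2 -> eball d rho v.
  rewrite /eball /= => h; have := enorm_sq (v - d); have := enorm_ge0 (v - d); nra.
have key : forall mu : R, (mu%:E <= mu_q_rho q d rho)%E -> mu <= dotv u s.
  move=> mu hmu.
  have := limnormal_bound q d ds u s rho mu qp qc ql rho0 _ hlim; rewrite s1 mulr1; apply.
  move=> d1 d1s d2 d2s h1 h2 hs1 hs2 hne.
  have E0 : 0 < dotv (d1 - d2) (d1 - d2).
    rewrite lt_def dotv_ge0 andbT; apply: contra hne => /eqP/dotv_eq0/eqP.
    by rewrite subr_eq0.
  have hb : (mu_q_rho q d rho <= (dotv (d1s - d2s) (d1 - d2) / (enorm (d1 - d2)) ^+ 2)%:E)%E.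
    apply: ereal_inf_lbound; exists d1, d1s, d2, d2s; split => //.
    by split; apply: eb.
  by have := le_trans hmu hb; rewrite lee_fin enorm_sq ler_pdivlMr // mulrC.
case E : (mu_q_rho q d rho) => [r| |].
- by rewrite lee_fin; apply: key; rewrite E.
- by have := key (dotv u s + 1); rewrite E leey => /(_ isT) h; exfalso; lra.
- by rewrite leNye.
Qed.

Lemma muq_bound (q : V -> \bar R) (d ds u s : V) :
  proper_fun q -> convex_fun q -> lsc_fun q ->
  lim_normal (gph_subdiff q) (d, ds) (u, - s) -> dotv s s = 1 ->
  (mu_q q d <= (dotv u s)%:E)%E.
Proof.
move=> qp qc ql hlim s1.
rewrite /mu_q.
have nic : {in Interval (BRight (0:R)) (BInfty R false) &,
    {homo mu_q_rho q d : a b / a <= b >-> (b <= a)%E}}.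
  move=> r1 r2 _ _ r12; apply: ereal_inf_le_tmp => z [d1 [d1s [d2 [d2s [[e1 e2] h1 h2 h3 ->]]]]].
  exists d1, d1s, d2, d2s; split => //; split; rewrite /eball /= in e1 e2 *; exact: le_trans r12.
have hc := nonincreasing_at_right_cvge (BInfty R false) isT nic.
rewrite (cvg_lim _ hc) //.
apply: ge_ereal_sup => _ [r /= r0 <-].
rewrite in_itv /= andbT in r0.
exact: muqrho_bound qp qc ql r0 hlim s1.
Qed.

End Final.
Theorem lemma4p4 (R : realType) (n : nat) (f : 'rV[R]_n -> 'rV[R]_n)
    (q : 'rV[R]_n -> \bar R) (x d ds : 'rV[R]_n) :
  C1 f -> monotone_map f ->
  proper_fun q -> convex_fun q -> lsc_fun q ->
  dom_subdiff q d -> subdiff q d ds ->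
  forall s : 'rV[R]_n, enorm s = 1 ->
    (mu_f f x + mu_q q d <=
      dist0 [set (s *m (jacobian f x)^T + u)%R | u in coderiv_subdiff q d ds s])%E.
Proof.
move=> _ _ qp qc ql _ _ s s1.
have s1' : dotv s s = 1 by rewrite -enorm_sq s1 expr1n.
apply: le_ereal_inf_tmp => _ [y [u hu <-] <-].
have hf : (mu_f f x <= (dotv (s *m jacobian f x) s)%:E)%E.
  by apply: ereal_inf_lbound; exists s.
have hq := muq_bound q d ds u s qp qc ql hu s1'.
apply: le_trans (leeD hf hq) _; rewrite -EFinD lee_fin.
rewrite -dotv_trmx -dotvDl.
by have := dotv_cs (s *m (jacobian f x)^T + u) s; rewrite s1 mulr1.
Qed.
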